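(* Let $q=p^h$ with $p$ an odd prime, and let $a,b,c\in{\rm GF}(q)$ be such that the polynomial $X^3+aX^2+bX+c$ is irreducible over ${\rm GF}(q)$. For $r,s,t\in{\rm GF}(q)$ let $$M_{r,s,t}=\begin{pmatrix}1&0&r&r^2-ar+s&t\\0&1&s&2rs-t&s^2+bs-cr\\0&0&1&2r&2s\\0&0&0&1&0\\0&0&0&0&1\end{pmatrix}.$$ Then $G=\{M_{r,s,t} : r,s,t\in{\rm GF}(q)\}$ is a group (under matrix multiplication) which is a $p$-group of order $q^3$. *)

(* Defs.v *)
From HB Require Import structures.
From mathcomp Require Import all_boot all_order all_algebra all_fingroup all_solvable.
Set Implicit Arguments. Unset Strict Implicit. Unset Printing Implicit Defensive.
Import GRing.Theory.
Local Open Scope ring_scope.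

Definition Mrst (F : fieldType) (a b c r s t : F) : 'M[F]_5 :=
  \matrix_(i < 5, j < 5)
    nth 0 (nth [::]
      [:: [:: 1; 0; r; r ^+ 2 - a * r + s; t];
          [:: 0; 1; s; 2 * r * s - t; s ^+ 2 + b * s - c * r];
          [:: 0; 0; 1; 2 * r; 2 * s];
          [:: 0; 0; 0; 1; 0];
          [:: 0; 0; 0; 0; 1]] i) j.

Definition Gmx (F : finFieldType) (a b c : F) : {set 'M[F]_5} :=
  [set Mrst a b c x.1.1 x.1.2 x.2 | x : F * F * F].

Definition GGL (F : finFieldType) (a b c : F) : {set {'GL_5[F]}} :=
  [set g : {'GL_5[F]} | GLval g \in Gmx a b c].

(* Main.v *)
Require Import Defs.
From HB Require Import structures.
From mathcomp Require Import all_boot all_order all_algebra all_fingroup all_solvable.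
From mathcomp Require Import ring.
Import GRing.Theory.
Local Open Scope ring_scope.

Lemma Mrst_mul (F : fieldType) (a b c r s t r' s' t' : F) :
  Mrst a b c r s t *m Mrst a b c r' s' t' = Mrst a b c (r + r') (s + s') (t + t' + 2 * r * s').
Proof.
apply/matrixP => i j; rewrite !mxE !big_ord_recl big_ord0 !mxE /=.
have := ltn_ord i; have := ltn_ord j.
case: i => [[|[|[|[|[|i]]]]] Hi] //=; case: j => [[|[|[|[|[|j]]]]] Hj] //= _ _;
 rewrite /bump /=; ring.
Qed.

Lemma Mrst0 (F : fieldType) (a b c : F) : Mrst a b c 0 0 0 = 1%:M.
Proof.
apply/matrixP => i j; rewrite !mxE.
have := ltn_ord i; have := ltn_ord j.
case: i => [[|[|[|[|[|i]]]]] Hi] //=; case: j => [[|[|[|[|[|j]]]]] Hj] //= _ _; ring.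
Qed.

Lemma Mrst_unit (F : fieldType) (a b c r s t : F) : Mrst a b c r s t \in unitmx.
Proof.
have [] := @mulmx1_unit _ _ (Mrst a b c r s t) (Mrst a b c (-r) (-s) (2 * r * s - t)) => //.
by rewrite Mrst_mul -(Mrst0 _ a b c); congr Mrst; ring.
Qed.

Theorem lemma2p1 (F : finFieldType) (p h : nat) (a b c : F) :
  prime p -> odd p -> #|F| = (p ^ h)%N ->
  irreducible_poly ('X^3 + a%:P * 'X^2 + b%:P * 'X + c%:P) ->
  [/\ Gmx a b c \subset unitmx,
      group_set (GGL a b c),
      #|Gmx a b c| = (#|F| ^ 3)%N,
      #|GGL a b c| = (#|F| ^ 3)%N
    & (p.-group (GGL a b c))%g].
Proof.
move=> pp _ cF _.
have sub : Gmx a b c \subset unitmx.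
  by apply/subsetP => m /imsetP [x _ ->]; exact: Mrst_unit.
have cG : #|Gmx a b c| = (#|F| ^ 3)%N.
  rewrite card_imset; first by rewrite !card_prod; rewrite expnS expnS expn1 mulnA.
  move=> [[r s] t] [[r' s'] t'] /= E.
  have E1 := congr1 (fun m : 'M[F]_5 => m 0 2%:R) E.
  have E2 := congr1 (fun m : 'M[F]_5 => m 1 2%:R) E.
  have E3 := congr1 (fun m : 'M[F]_5 => m 0 4%:R) E.
  move: E1 E2 E3; rewrite !mxE /= => -> -> -> //.
have cGL : #|GGL a b c| = (#|F| ^ 3)%N.
  rewrite -cG -(card_imset _ (@val_inj _ _ {'GL_5[F]})); congr (#|pred_of_set _|).
  apply/setP => m; apply/imsetP/idP.
    by move=> [g]; rewrite inE => gi ->.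
  move=> mG; have mu : m \in unitmx by exact: (subsetP sub).
  by exists (Sub m mu : {'GL_5[F]}) => //; rewrite inE.
split => //.
- apply/group_setP; split.
    by rewrite inE GL_1E; apply/imsetP; exists (0, 0, 0) => //; rewrite Mrst0.
  move=> x y; rewrite !inE GL_MxE => /imsetP [[[r s] t] _ ->] /imsetP [[[r' s'] t'] _ ->].
  by rewrite Mrst_mul; apply/imsetP; eexists (_, _, _).
- rewrite /pgroup cGL cF -expnM pnatX pnat_id //.
Qed.
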